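(* Let $\mathcal X_{aux}\subset\mathbb R^n$ be a set divided into distinct semantic groups $\mathcal X_{aux}=\mathcal X^{y_1}\cup\cdots\cup\mathcal X^{y_m}$, where each group $\mathcal X^{y_i}$ consists of the points with semantic label $y_i$, and at least two groups with different labels are nonempty. Suppose the following semantic-change assumption holds: there exists $\zeta>0$ such that for any $x_i\in\mathcal X^{y_i}$, $x_j\in\mathcal X^{y_j}$ with $y_i\neq y_j$ and any $\lambda$ with $\zeta<\lambda<1-\zeta$, the point $\hat x=\lambda x_i+(1-\lambda)x_j$ belongs to neither $\mathcal X^{y_i}$ nor $\mathcal X^{y_j}$. Define $$\mathcal G\mathcal X_{aux}=\{\hat x\mid \hat x=\lambda x_1+(1-\lambda)x_2,\ x_1,x_2\in\mathcal X_{aux},\ \lambda\in[0,1]\}.$$ Then $\mathcal X_{aux}\subset\mathcal G\mathcal X_{aux}$ (proper inclusion).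
   Context: $\mathcal X_{aux}$ is the input space of auxiliary outliers used for OOD detection training; $\mathcal G\mathcal X_{aux}$ is the space obtained by applying all mixup transforms (all pairs of points and all interpolation weights $\lambda\in[0,1]$) to it. Semantic labels of points partition $\mathcal X_{aux}$ into the groups $\mathcal X^{y_i}$. *)

(* Defs.v *)
From mathcomp Require Import all_boot all_order all_algebra.
From mathcomp Require Import all_classical all_reals.
Set Implicit Arguments. Unset Strict Implicit. Unset Printing Implicit Defensive.
Import Order.TTheory GRing.Theory Num.Theory.
Local Open Scope ring_scope.
Local Open Scope classical_set_scope.

Definition sem_group (R : realType) (n m : nat) (X : set 'rV[R]_n)
  (lab : 'rV[R]_n -> 'I_m) (y : 'I_m) : set 'rV[R]_n :=
  [set x | X x /\ lab x = y].

Definition mixup (R : realType) (n : nat) (lam : R) (x1 x2 : 'rV[R]_n) : 'rV[R]_n :=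
  lam *: x1 + (1 - lam) *: x2.

Definition mixup_space (R : realType) (n : nat) (X : set 'rV[R]_n) : set 'rV[R]_n :=
  [set z | exists x1 x2 lam, [/\ X x1, X x2, 0 <= lam <= 1 & z = mixup lam x1 x2]].

Definition semantic_change (R : realType) (n m : nat) (X : set 'rV[R]_n)
  (lab : 'rV[R]_n -> 'I_m) (zeta : R) : Prop :=
  forall (yi yj : 'I_m) (xi xj : 'rV[R]_n) (lam : R),
    sem_group X lab yi xi -> sem_group X lab yj xj -> yi <> yj ->
    zeta < lam < 1 - zeta ->
    ~ sem_group X lab yi (mixup lam xi xj) /\ ~ sem_group X lab yj (mixup lam xi xj).

(* Main.v *)
Require Import Defs.
From mathcomp Require Import all_boot all_order all_algebra.
From mathcomp Require Import all_classical all_reals.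
From mathcomp Require Import ring lra.
Import Order.TTheory GRing.Theory Num.Theory.
Local Open Scope ring_scope.
Local Open Scope classical_set_scope.

Section Pure.
Variables (R : realType) (m : nat) (h : R -> 'I_m) (z : R).
Hypothesis hz : 0 < z < 2^-1.
Hypothesis h01 : h 0 <> h 1.
Hypothesis Kw : forall s t u : R, 0 <= s -> s < t -> t <= 1 -> h s <> h t ->
  s + z * (t - s) < u -> u < t - z * (t - s) -> h u <> h s /\ h u <> h t.

Lemma window_nonmono (s t : R) : 0 <= s -> s < t -> t <= 1 -> h s <> h t ->
  exists u, [/\ s + z * (t - s) < u, u < t - z * (t - s) & h u <> h ((s + t) / 2)].
Proof.
move=> s0 st t1 hst.
case/andP: hz => z0 z2.
set mid := (s + t) / 2.
have midW1 : s + z * (t - s) < mid.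
  rewrite /mid; have : z * (t - s) < 2^-1 * (t - s) by rewrite ltr_pM2r ?subr_gt0.
  lra.
have midW2 : mid < t - z * (t - s).
  rewrite /mid; have : z * (t - s) < 2^-1 * (t - s) by rewrite ltr_pM2r ?subr_gt0.
  lra.
have zts : 0 < z * (t - s) by rewrite mulr_gt0 // subr_gt0.
apply: contrapT => Hno.
have mono : forall u, s + z * (t - s) < u -> u < t - z * (t - s) -> h u = h mid.
  move=> u h1 h2; apply: contrapT => hne; apply: Hno; by exists u.
have [hms hmt] := Kw _ _ _ s0 st t1 hst midW1 midW2.
pose S := [set x | s <= x <= mid /\ h x <> h mid].
have Ss : S s by split; [apply/andP; split; lra | move=> e; apply: hms; rewrite e].
have ubw : ubound S (s + z * (t - s)).
  move=> x [/andP [x1 x2] hx]; rewrite leNgt; apply/negP => lt.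
  by apply: hx; apply: mono => //; lra.
have hsS : has_sup S by split; [exists s | exists (s + z * (t - s))].
have pw : sup S <= s + z * (t - s) by apply: ge_sup => //; exists s.
have eps0 : 0 < mid - sup S by lra.
have [q Sq qp] := sup_adherent eps0 hsS.
have qle : q <= sup S by apply: sup_upper_bound.
case: Sq => /andP [q1 q2] hq.
have qm : q < mid by lra.
have t1' : mid <= 1 by rewrite /mid; lra.
have q0 : 0 <= q by lra.
set u := (q + mid) / 2.
have u1 : q + z * (mid - q) < u.
  rewrite /u; have : z * (mid - q) < 2^-1 * (mid - q) by rewrite ltr_pM2r ?subr_gt0.
  lra.
have u2 : u < mid - z * (mid - q).
  rewrite /u; have : z * (mid - q) < 2^-1 * (mid - q) by rewrite ltr_pM2r ?subr_gt0.
  lra.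
have [_ hum] := Kw _ _ _ q0 qm t1' hq u1 u2.
have up : sup S < u by rewrite /u; lra.
apply: hum; apply: contrapT => hne.
have : S u by split => //; apply/andP; split; rewrite /u; lra.
move/(sup_upper_bound hsS) => /=; lra.
Qed.

Lemma descent k : exists (s t : R) (E : {set 'I_m}),
  [/\ 0 <= s, s < t, t <= 1, h s <> h t &
      ((k <= #|E|)%N /\ forall u, s <= u <= t -> h u \notin E)].
Proof.
case/andP: hz => z0 z2.
elim: k => [|k [s [t [E [s0 st t1 hst [kE hE]]]]]].
  exists (0:R). exists (1:R). exists (finset (fun _ : 'I_m => false)). split; [lra|lra|lra|done|].
  split => // u _; by rewrite inE.
have zts : 0 < z * (t - s) by rewrite mulr_gt0 // subr_gt0.
have hsE : h s \notin E by apply: hE; apply/andP; split; lra.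
have htE : h t \notin E by apply: hE; apply/andP; split; lra.
have step : forall a b : R, s + z * (t - s) < a -> a < b -> b < t - z * (t - s) ->
   h a <> h b -> exists (s0 t0 : R) (E0 : {set 'I_m}),
  [/\ 0 <= s0, s0 < t0, t0 <= 1, h s0 <> h t0 &
      ((k.+1 <= #|E0|)%N /\ forall u, s0 <= u <= t0 -> h u \notin E0)].
  move=> a b a1 ab b2 hab; exists a, b, (h s |: (h t |: E)).
  split; [lra|lra|lra|done|split].
    rewrite cardsU1 cardsU1 in_setU1 (negbTE hsE) htE orbF.
    have -> : (h s == h t) = false by apply/eqP.
    by rewrite /= add1n add1n ltnS ltnW.
  move=> u /andP [ua ub].
  have w1 : s + z * (t - s) < u by lra.
  have w2 : u < t - z * (t - s) by lra.
  have [k1 k2] := Kw _ _ _ s0 st t1 hst w1 w2.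
  rewrite !in_setU1 negb_or negb_or; apply/and3P; split.
  - by apply/eqP.
  - by apply/eqP.
  - by apply: hE; apply/andP; split; lra.
have [u [u1 u2 hu]] := window_nonmono _ _ s0 st t1 hst.
set mid := (s + t) / 2 in hu.
have midW1 : s + z * (t - s) < mid.
  rewrite /mid; have : z * (t - s) < 2^-1 * (t - s) by rewrite ltr_pM2r ?subr_gt0.
  lra.
have midW2 : mid < t - z * (t - s).
  rewrite /mid; have : z * (t - s) < 2^-1 * (t - s) by rewrite ltr_pM2r ?subr_gt0.
  lra.
case: (ltgtP u mid) => [ult|ugt|ueq].
- exact: (step u mid u1 ult midW2 hu).
- by apply: (step mid u midW1 ugt u2) => e; apply: hu.
- by rewrite ueq in hu.
Qed.

Lemma pure_false : False.
Proof.
have [s [t [E [_ _ _ _ [kE _]]]]] := descent m.+1.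
move: (max_card E); rewrite card_ord => /(leq_trans kE).
by rewrite ltnn.
Qed.
End Pure.

Lemma mixup_aff (R : realType) (n : nat) (xi xj : 'rV[R]_n) (l s t : R) :
  mixup l (mixup s xi xj) (mixup t xi xj) = mixup (l * s + (1 - l) * t) xi xj.
Proof.
rewrite /mixup !scalerDr !scalerA.
have -> : 1 - (l * s + (1 - l) * t) = l * (1 - s) + (1 - l) * (1 - t) by ring.
rewrite !scalerDl.
by rewrite addrACA.
Qed.

Theorem lemma1 (R : realType) (n m : nat) (X : set 'rV[R]_n)
  (lab : 'rV[R]_n -> 'I_m)
  (two_groups : exists (yi yj : 'I_m), yi <> yj /\
      sem_group X lab yi !=set0 /\ sem_group X lab yj !=set0)
  (hsc : exists zeta : R, 0 < zeta < 2^-1 /\ semantic_change X lab zeta) :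
  X `<` mixup_space X.
Proof.
split.
  move=> x Xx; exists x, x, 1; split => //; first by rewrite ler01 lexx.
  by rewrite /mixup subrr scale0r addr0 scale1r.
move=> GX.
have [yi [yj [yij [[xi [Xi li]] [xj [Xj lj]]]]]] := two_groups.
have [z [hz sc]] := hsc.
pose p (u : R) := mixup u xi xj.
have pX : forall u, 0 <= u <= 1 -> X (p u).
  by move=> u hu; apply: GX; exists xi, xj, u.
pose h (u : R) := lab (p u).
have p1 : p 1 = xi by rewrite /p /mixup subrr scale0r addr0 scale1r.
have p0 : p 0 = xj by rewrite /p /mixup subr0 scale0r add0r scale1r.
apply: (@pure_false R m h z hz).
  by rewrite /h p0 p1 lj li => e; apply: yij.
move=> s t u s0 st t1 hst w1 w2.
have ts0 : 0 < t - s by rewrite subr_gt0.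
case/andP: hz => z0 z2.
have zts : 0 < z * (t - s) by rewrite mulr_gt0.
pose l := (t - u) / (t - s).
have lu : l * s + (1 - l) * t = u.
  rewrite /l; field; by rewrite gt_eqF.
have l1 : z < l.
  rewrite /l ltr_pdivlMr //; lra.
have l2 : l < 1 - z.
  rewrite /l ltr_pdivrMr //; lra.
have Xs : sem_group X lab (h s) (p s) by split => //; apply: pX; apply/andP; split; lra.
have Xt : sem_group X lab (h t) (p t) by split => //; apply: pX; apply/andP; split; lra.
have [n1 n2] := sc _ _ _ _ l Xs Xt hst (introT andP (conj l1 l2)).
have Xu : X (p u) by apply: pX; apply/andP; split; lra.
rewrite /p mixup_aff lu -/(p u) in n1 n2.
split => e.
- by apply: n1; split.
- by apply: n2; split.
Qed.
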